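(* Let $L$ be a Latin array of order $n$, let $D$ be a diagonal of $L$ of weight $w$, and let $e$ be a cell of $D$. Then there is a diagonal of $L$ containing $e$, of weight at least $w$, on which each symbol appears at most twice.
   Context: A Latin array of order $n$ is an $n\times n$ matrix each of whose cells contains a symbol (from an arbitrary set of symbols), such that no symbol occurs more than once in any row or in any column. A diagonal of an $n\times n$ array is a selection of $n$ cells, one from each row and one from each column; its weight is the number of distinct symbols on it. *)

(* Defs.v *)
From mathcomp Require Import all_boot all_fingroup.
Set Implicit Arguments. Unset Strict Implicit. Unset Printing Implicit Defensive.

Definition latin_array (S : eqType) (n : nat) (L : 'I_n -> 'I_n -> S) : Prop :=
  (forall i j1 j2, L i j1 = L i j2 -> j1 = j2) /\
  (forall j i1 i2, L i1 j = L i2 j -> i1 = i2).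

(* A diagonal is represented by a permutation s: its cells are (i, s i). *)
Definition diag_symbols (S : eqType) (n : nat) (L : 'I_n -> 'I_n -> S)
  (s : {perm 'I_n}) : seq S := [seq L i (s i) | i <- enum 'I_n].

Definition weight (S : eqType) (n : nat) (L : 'I_n -> 'I_n -> S)
  (s : {perm 'I_n}) : nat := size (undup (diag_symbols L s)).

Definition on_diag (n : nat) (s : {perm 'I_n}) (i j : 'I_n) : bool := s i == j.

(* Main.v *)
Require Import Defs.
From mathcomp Require Import all_boot all_fingroup.
From mathcomp Require Import zify.
Set Implicit Arguments. Unset Strict Implicit. Unset Printing Implicit Defensive.

Lemma count_enum_card (T : finType) (p : pred T) : count p (enum T) = #|[set x | p x]|.
Proof. by rewrite cardsE cardE enumT -size_filter /enum_mem. Qed.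

Lemma rel_card (T : finType) (A B : {set T}) (rho : T -> T -> bool) :
  (forall a, a \in A -> exists2 b, b \in B & rho a b) ->
  (forall a1 a2 b, a1 \in A -> a2 \in A -> rho a1 b -> rho a2 b -> a1 = a2) ->
  #|A| <= #|B|.
Proof.
move=> ex inj.
pose g a := odflt a [pick b in B | rho a b].
have gP a : a \in A -> (g a \in B) && rho a (g a).
  move=> aA; rewrite /g; case: pickP => [b /andP[bB rab] | none] /=.
    by rewrite bB rab.
  by case: (ex a aA) => b bB rab; move: (none b); rewrite bB rab.
have ginj : {in A &, injective g}.
  move=> a1 a2 a1A a2A eq.
  move: (gP a1 a1A) (gP a2 a2A) => /andP[_ r1] /andP[_ r2].
  by apply: (inj a1 a2 (g a1)) => //; rewrite eq.
rewrite -(card_in_imset ginj); apply: subset_leq_card.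
by apply/subsetP => _ /imsetP[a aA ->]; case/andP: (gP a aA).
Qed.

Section Main.
Variables (S : eqType) (n : nat) (L : 'I_n -> 'I_n -> S).
Hypothesis HL : latin_array L.
Variables (r c : 'I_n) (w : nat).

Lemma rowinj i j1 j2 : L i j1 = L i j2 -> j1 = j2.
Proof. by case: HL => H _; apply: H. Qed.
Lemma colinj j i1 i2 : L i1 j = L i2 j -> i1 = i2.
Proof. by case: HL => _ H; apply: H. Qed.

Definition cnt (s : {perm 'I_n}) (R : {set 'I_n}) (x : S) :=
  #|R :&: [set j | L j (s j) == x]|.

Definition inv (s : {perm 'I_n}) (R P : {set 'I_n}) :=
  [/\ (r \in R /\ s r = c), P \subset R, w <= #|P|,
      ({in P &, injective (fun i => L i (s i))}) & forall x, cnt s R x <= 2].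

Lemma cnt_gt0 (s : {perm 'I_n}) (R : {set 'I_n}) j : j \in R -> 0 < cnt s R (L j (s j)).
Proof. by move=> jR; apply/card_gt0P; exists j; rewrite !inE jR eqxx. Qed.

Lemma step (s : {perm 'I_n}) (R P : {set 'I_n}) : inv s R P -> #|R| < n ->
  exists u, u \notin R /\ exists s' P', inv s' (u |: R) P'.
Proof.
move=> [[rR sr] PR wP injP cnt2] Rlt.
have [u uR] : exists u, u \notin R.
  case: (pickP [pred u | u \notin R]) => [u uR | none]; first by exists u.
  have : [set: 'I_n] \subset R.
    by apply/subsetP => i _; move: (none i) => /= /negbFE.
  move/subset_leq_card; rewrite cardsT card_ord => h.
  by move: Rlt; rewrite ltnNge h.
exists u; split => //.
have uneR j : j \in R -> j != u by move=> jR; apply/eqP => e; move: uR; rewrite -e jR.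
set x0 := L u (s u).
case: (leqP (cnt s R x0) 1) => hx0.
  exists s, P; split => //.
  - by rewrite in_setU1 rR orbT sr.
  - by apply: subset_trans PR (subsetU1 _ _).
  move=> x; rewrite /cnt; case: (eqVneq x x0) => [->|nx].
    apply: (@leq_trans #|u |: (R :&: [set j | L j (s j) == x0])|).
      apply: subset_leq_card; apply/subsetP => j; rewrite !inE.
      by case/andP => /orP[->|->] -> //; rewrite orbT.
    by rewrite cardsU1; apply: (leq_add (leq_b1 _) hx0).
  apply: leq_trans (cnt2 x); apply: subset_leq_card; apply/subsetP => j.
  rewrite !inE => /andP[/orP[/eqP ->|jR] hj]; last by rewrite jR hj.
  by move: nx; rewrite -(eqP hj) eqxx.
have [r' [r'R r'r y0 z1]] : exists r',
    [/\ r' \in R, r' != r, cnt s R (L r' (s u)) == 0 & cnt s R (L u (s r')) <= 1].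
  case: (pickP [pred r' | [&& r' \in R, r' != r, cnt s R (L r' (s u)) == 0 &
                             cnt s R (L u (s r')) <= 1]]) => [r' /and4P[? ? ? ?] | none].
    by exists r'.
  exfalso.
  pose fst j := [forall j' in R, (L j' (s j') == L j (s j)) ==> (j <= j')].
  pose Y := [set r' | cnt s R (L r' (s u)) != 0].
  pose X0 := [set j | L j (s j) == x0].
  pose Fs := [set j | fst j].
  pose R1 := R :\: X0.
  have h1 : #|(R :\ r) :&: Y| <= #|R1 :&: Fs|.
    apply: (@rel_card _ _ _ (fun a b => L b (s b) == L a (s u))).
      move=> a; rewrite !inE => /andP[/andP[ar aR] ya].
      have /card_gt0P [j0] : 0 < cnt s R (L a (s u)) by rewrite lt0n.
      rewrite !inE => /andP[j0R fj0].
      case: (@arg_minnP _ j0 (fun j => (j \in R) && (L j (s j) == L a (s u)))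
               (fun j => nat_of_ord j)); first by rewrite j0R fj0.
      move=> jm /andP[jmR /eqP fjm] jmin.
      exists jm; last by rewrite fjm. rewrite /R1 /Fs /X0 !inE jmR fjm andbT /=.
      apply/andP; split.
        apply/eqP => e; have := colinj e; move=> ea; move: (uneR a aR); rewrite ea eqxx //.
      apply/forallP => j'; apply/implyP => j'R; apply/implyP => /eqP fj'.
      by apply: jmin; rewrite j'R fj' fjm eqxx.
    move=> a1 a2 b; rewrite !inE => /andP[/andP[_ _] _] /andP[/andP[_ _] _] /eqP e1 /eqP e2.
    by apply: (@colinj (s u)); rewrite -e1 -e2.
  have h2 : #|(R :\ r) :\: Y| <= #|R1 :\: Fs|.
    apply: (@rel_card _ _ _ (fun a b => L b (s b) == L u (s a))).
      move=> a; rewrite !inE negbK => /andP[/eqP ya /andP[ar aR]].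
      have zgt : 1 < cnt s R (L u (s a)).
        rewrite ltnNge; apply/negP => hz.
        by move: (none a); rewrite /= aR ar ya eqxx hz.
      case/card_gt1P: zgt => j1 [j2 []]; rewrite !inE.
      move=> /andP[j1R /eqP f1] /andP[j2R /eqP f2] j12.
      have zx0 : L u (s a) != x0.
        apply/eqP => /rowinj /perm_inj e; move: (uneR a aR); rewrite e eqxx //.
      have key : forall ja jb, ja \in R -> jb \in R -> L ja (s ja) = L u (s a) ->
          L jb (s jb) = L u (s a) -> ja < jb -> exists2 b, b \in R1 :\: Fs & L b (s b) == L u (s a).
        move=> ja jb jaR jbR fa fb lab; exists jb; last by rewrite fb.
        rewrite !inE jbR fb zx0 /= andbT.
        apply/forallP => H; move: (H ja); rewrite jaR fa fb eqxx /=.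
        by rewrite leqNgt lab.
      case: (ltngtP j1 j2) => l.
      - exact: (key j1 j2).
      - exact: (key j2 j1).
      - by move: j12; rewrite (val_inj l) eqxx.
    move=> a1 a2 b; rewrite !inE => /andP[_ /andP[_ _]] /andP[_ /andP[_ _]] /eqP e1 /eqP e2.
    apply: (@perm_inj _ s); apply: (@rowinj u). by rewrite -e1 -e2.
  have e1 := cardsID Y (R :\ r).
  have e2 := cardsID Fs R1.
  have e3 := cardsD1 r R; rewrite rR in e3.
  have e4 := cardsID X0 R.
  have e5 : #|R :&: X0| = cnt s R x0 by [].
  have e6 : #|R1| = #|R :\: X0| by []. have H := leq_add h1 h2. rewrite e1 e2 in H. rewrite e5 -e6 in e4. have : cnt s R x0 + #|R1| <= 1 + #|R1| by rewrite e4 e3 add1n ltnS. by rewrite leq_add2r leqNgt hx0.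
have r'u : r' != u by apply: uneR.
have ru : r != u by apply: uneR.
have y0' j : j \in R -> L j (s j) != L r' (s u).
  move=> jR; apply/eqP => e; have := cnt_gt0 s jR; rewrite e (eqP y0) //.
pose s' := (tperm u r' * s)%g.
have s'E j : j \in R -> j != r' -> s' j = s j.
  move=> jR jr; rewrite /s' permM tpermD // eq_sym //; exact: uneR.
have s'u : s' u = s r' by rewrite /s' permM tpermL.
have s'r' : s' r' = s u by rewrite /s' permM tpermR.
exists s', P; split.
- by rewrite in_setU1 rR orbT s'E // eq_sym.
- by apply: subset_trans PR (subsetU1 _ _).
- done.
- move=> i1 i2 i1P i2P /=.
  have i1R := subsetP PR _ i1P; have i2R := subsetP PR _ i2P.
  case: (eqVneq i1 r') => [->|n1]; case: (eqVneq i2 r') => [->|n2] //.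
  + rewrite s'r' s'E // => e; by move: (y0' _ i2R); rewrite e eqxx.
  + rewrite s'r' s'E // => e; by move: (y0' _ i1R); rewrite e eqxx.
  + rewrite !s'E //; exact: injP.
- move=> x; rewrite /cnt.
  case: (eqVneq x (L r' (s u))) => [->|nxy].
    apply: (@leq_trans #|[set r'; u]|); last by rewrite cards2 ltnS leq_b1.
    apply: subset_leq_card; apply/subsetP => j; rewrite !inE.
    case/andP => /orP[->|jR]; first by rewrite orbT.
    case: (eqVneq j r') => [->|jr] //=.
    by rewrite s'E // => /eqP e; move: (y0' _ jR); rewrite e eqxx.
  case: (eqVneq x (L u (s r'))) => [ex|nxz]. rewrite ex.
    apply: (@leq_trans #|u |: (R :&: [set j | L j (s j) == L u (s r')])|).
      apply: subset_leq_card; apply/subsetP => j; rewrite !inE.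
      case/andP => /orP[->|jR] //.
      case: (eqVneq j r') => [->|jr].
        by rewrite s'r' => /eqP e; move: nxy; rewrite e ex eqxx.
      by rewrite s'E // => ->; rewrite jR orbT.
    by rewrite cardsU1; apply: (leq_add (leq_b1 _) z1).
  apply: leq_trans (cnt2 x); apply: subset_leq_card; apply/subsetP => j.
  rewrite !inE => /andP[/orP[/eqP ->|jR] hj].
    by move: hj; rewrite s'u => /eqP e; move: nxz; rewrite e eqxx.
  case: (eqVneq j r') => [e|jr].
    by move: hj; rewrite e s'r' => /eqP e'; move: nxy; rewrite e' eqxx.
  by rewrite jR -(s'E j jR jr) hj.
Qed.

Lemma grow (D : {perm 'I_n}) (Hw : weight L D = w) (He : D r = c) k :
  k <= n -> exists s R P, inv s R P /\ k <= #|R|.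
Proof.
elim: k => [_|k IH kn].
  pose P0 := [set i : 'I_n | [forall j : 'I_n, (j < i) ==> (L j (D j) != L i (D i))]].
  have injP0 : {in P0 &, injective (fun i => L i (D i))}.
    move=> i1 i2; rewrite !inE => /forallP h1 /forallP h2 /= e.
    apply: val_inj; case: (ltngtP i1 i2) => // l.
      by move: (h2 i1); rewrite l e eqxx.
    by move: (h1 i2); rewrite l e eqxx.
  exists D, (r |: P0), P0; split => //.
  split; first by split; [rewrite in_setU1 eqxx | ].
  - exact: subsetU1.
  - rewrite -Hw /weight /diag_symbols cardE -(size_map (fun i => L i (D i))).
    apply: uniq_leq_size; first exact: undup_uniq.
    move=> x; rewrite mem_undup => /mapP [i _ ->].
    case: (@arg_minnP _ i (fun j => L j (D j) == L i (D i)) (fun j => nat_of_ord j) (eqxx _)).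
    move=> jm /eqP fjm jmin; rewrite -fjm; apply: map_f; rewrite mem_enum inE.
    apply/forallP => j; apply/implyP => ljm; apply/negP => /eqP fj.
    have := jmin j; rewrite fj fjm eqxx => /(_ isT); by rewrite leqNgt ljm.
  - exact: injP0.
  - move=> x; rewrite /cnt.
    apply: (@leq_trans #|r |: (P0 :&: [set j | L j (D j) == x])|).
      apply: subset_leq_card; apply/subsetP => j; rewrite !inE.
      by case/andP => /orP[->|->] -> //; rewrite orbT.
    rewrite cardsU1; apply: (leq_add (leq_b1 _)).
    apply/card_le1_eqP => a b; rewrite !inE => /andP[aP /eqP fa] /andP[bP /eqP fb].
    by apply: injP0; rewrite /= ?fa ?fb // inE.
have [s [R [P [I kR]]]] := IH (ltnW kn).
case: (ltnP k #|R|) => kR'.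
  by exists s, R, P.
have eR : #|R| = k by apply/eqP; rewrite eqn_leq kR' kR.
have Rn : #|R| < n by rewrite eR.
have [u [uR [s' [P' I']]]] := step I Rn.
exists s', (u |: R), P'; split => //.
by rewrite cardsU1 uR eR.
Qed.

End Main.

Theorem lemma2p3 (S : eqType) (n : nat) (L : 'I_n -> 'I_n -> S)
  (HL : latin_array L) (D : {perm 'I_n}) (w : nat) (Hw : weight L D = w)
  (r c : 'I_n) (He : on_diag D r c) :
  exists D' : {perm 'I_n},
    [/\ on_diag D' r c, w <= weight L D' &
        forall x : S, count_mem x (diag_symbols L D') <= 2].
Proof.
have [s [R [P [[[rR sr] PR wP injP cnt2] nR]]]] :=
  @grow S n L HL r c w D Hw (eqP He) n (leqnn n).
have RT : R = setT by apply/eqP; rewrite eqEcard subsetT cardsT card_ord.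
exists s; split.
- by rewrite /on_diag sr eqxx.
- apply: leq_trans wP _.
  rewrite /weight /diag_symbols cardE -(size_map (fun i => L i (s i))).
  apply: uniq_leq_size.
    rewrite map_inj_in_uniq ?enum_uniq //.
    by move=> a b; rewrite !mem_enum; exact: injP.
  by move=> x /mapP [i iP ->]; rewrite mem_undup; apply: map_f; rewrite mem_enum.
- move=> x; rewrite /diag_symbols count_map count_enum_card.
  move: (cnt2 x); rewrite /cnt RT setTI.
  by [].
Qed.
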